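(* Let $\mathcal{B}\subseteq\mathcal{P}(X)$ be a countable admissible algebra, let $\mathcal{S}\subseteq\mathcal{N}(\mathcal{B})$ be a countable collection and let $\varepsilon>0$. Then there is a set $A\subseteq X$ such that: (i) the algebra generated by $\mathcal{B}\cup\{A\}$ is admissible; (ii) for every $\{B_k\}_{k\in\omega}\in\mathcal{S}$ there is $k_0\in\omega$ such that $(B_{k_0})_{|n}\subseteq A_{|n}$ for all but finitely many $n\in\omega$; (iii) $\mu(A)\le\varepsilon$.
   Context: $\omega=\{0,1,2,\dots\}$, $2^\omega$ is the Cantor set, $\lambda$ is the usual product probability measure on $2^\omega$, and $\mathrm{Clop}(2^\omega)$ is the algebra of clopen subsets of $2^\omega$. Let $X=\omega\times 2^\omega$. For $B\subseteq X$ and $n\in\omega$, $B_{|n}=\{t\in 2^\omega:(n,t)\in B\}$. A set $B\subseteq X$ is admissible if $B_{|n}\in\mathrm{Clop}(2^\omega)$ for all $n\in\omega$ and $\lim_n\lambda(B_{|n})$ exists; in that case $\mu(B):=\lim_n\lambda(B_{|n})$. An algebra of subsets of $X$ is admissible if all its elements are admissible. For an admissible algebra $\mathcal{B}$, $\mathcal{N}(\mathcal{B})$ is the collection of all decreasing sequences $\{B_k\}_{k\in\omega}$ in $\mathcal{B}$ with $\lim_k\mu(B_k)=0$. *)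

(* Defs.v *)
From HB Require Import structures.
From mathcomp Require Import all_boot all_order all_algebra.
From mathcomp Require Import all_classical all_reals.
From mathcomp Require Import topology normedtype sequences cantor.
Set Implicit Arguments. Unset Strict Implicit. Unset Printing Implicit Defensive.
Import Order.TTheory GRing.Theory Num.Theory.
Import numFieldTopology.Exports numFieldNormedType.Exports.
Local Open Scope classical_set_scope.
Local Open Scope ring_scope.

Definition cyl (N : nat) (s : {ffun 'I_N -> bool}) : set cantor_space :=
  [set t | forall i : 'I_N, t (nat_of_ord i) = s i].

Definition ncyl (C : set cantor_space) (N : nat) : nat :=
  #|[set s : {ffun 'I_N -> bool} | `[< cyl s `<=` C >] ]|.

(** The usual product (coin-tossing) probability measure lambda, given by its
    inner approximation by cylinders: lambda(C) = sup_N ncyl C N / 2^N.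
    On clopen (indeed on open) sets this coincides with the product measure. *)
Definition lam {R : realType} (C : set cantor_space) : R :=
  sup (range (fun N : nat => (ncyl C N)%:R / (2 ^+ N : R))).

Definition X := (nat * cantor_space)%type.
Definition sect (B : set X) (n : nat) : set cantor_space := [set t | B (n, t)].

Definition admissible {R : realType} (B : set X) : Prop :=
  (forall n, clopen (sect B n)) /\
  exists l : R, (fun n => lam (sect B n) : R) @ \oo --> l.

Definition mu {R : realType} (B : set X) : R :=
  limn (fun n => lam (sect B n) : R).

Definition set_algebra (F : set (set X)) : Prop :=
  [/\ F setT, (forall A, F A -> F (~` A)) &
      (forall A B, F A -> F B -> F (A `|` B))].

Definition gen_algebra (G : set (set X)) : set (set X) := smallest set_algebra G.

Definition admissible_algebra {R : realType} (F : set (set X)) : Prop :=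
  set_algebra F /\ forall B, F B -> admissible (R := R) B.

Definition Nseq {R : realType} (F : set (set X)) : set (nat -> set X) :=
  [set Bs | (forall k, F (Bs k)) /\ (forall k, Bs k.+1 `<=` Bs k) /\
            (fun k => mu (Bs k) : R) @ \oo --> (0 : R)].

(* Main.v *)
Require Import Defs.
From HB Require Import structures.
From mathcomp Require Import all_boot all_order all_algebra.
From mathcomp Require Import all_classical all_reals.
From mathcomp Require Import topology normedtype sequences cantor.
From mathcomp Require Import ring lra zify.
Import Order.TTheory GRing.Theory Num.Theory.
Import numFieldTopology.Exports numFieldNormedType.Exports.
Local Open Scope classical_set_scope.
Local Open Scope ring_scope.
Set Implicit Arguments. Unset Strict Implicit. Unset Printing Implicit Defensive.

Definition agree (N : nat) (t t' : cantor_space) := forall i, (i < N)%N -> t i = t' i.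

Lemma nbhs_agree (t : cantor_space) N : nbhs t [set t' | agree N t t'].
Proof.
have FF := nbhs_filter t.
elim: N => [|N IH].
  by apply: (@filterS _ _ FF setT); [move=> t' _ i|apply: filterT].
have h : nbhs t [set t' : cantor_space | t' N = t N].
  have := @proj_continuous nat (fun _ => bool) N t.
  move=> /(_ [set t N]) H; apply: H.
  by [].
apply: (@filterS _ _ FF _ _ _ (@filterI _ _ FF _ _ IH h)) => t' [a b] i.
rewrite ltnS leq_eqVlt => /orP[/eqP->|/a //].
by rewrite b.
Qed.

Lemma agree_nbhs (t : cantor_space) (U : set cantor_space) :
  nbhs t U -> exists N, forall t', agree N t t' -> U t'.
Proof.
set G := filter_from [set: nat] (fun N => [set t' : cantor_space | agree N t t']).
have GF : Filter G.
  apply: filter_from_filter; first by exists 0%N.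
  move=> i j _ _; exists (maxn i j) => // t' H; split => k Hk; apply: H.
    by rewrite (leq_trans Hk) // leq_maxl.
  by rewrite (leq_trans Hk) // leq_maxr.
have cv : G --> t.
  apply/(@pointwise_cvgP nat bool G t GF) => i.
  move=> B /= Bi; exists i.+1 => // t' H; rewrite /= -H //; exact: nbhs_singleton.
move=> /cv [N _ HN]; exists N => t' /HN //.
Qed.

Lemma agree_sym N t t' : agree N t t' -> agree N t' t.
Proof. by move=> h i /h ->. Qed.

Lemma agree_le M N t t' : (M <= N)%N -> agree N t t' -> agree M t t'.
Proof. by move=> MN h i iM; apply: h; apply: leq_trans MN. Qed.

Lemma agree_trans N t t' t'' : agree N t t' -> agree N t' t'' -> agree N t t''.
Proof. by move=> h1 h2 i iN; rewrite h1 // h2. Qed.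

Lemma clopen_decided (C : set cantor_space) : clopen C ->
  exists N, forall t t', agree N t t' -> C t -> C t'.
Proof.
move=> [Co Cc].
have Cco : open (~` C) by exact: closed_openC.
have := (compact_near_coveringP _).1 cantor_space_compact nat (\oo)
  (fun N x => forall y, agree N x y -> (C x <-> C y)) _.
case.
- move=> x _.
  have [Cx|nCx] := pselect (C x).
  + have : nbhs x C by move: Co; rewrite openE => /(_ x Cx).
    move=> /agree_nbhs [M HM].
    exists ([set x' | agree M x x'], [set N | (M <= N)%N]); first split.
    * exact: nbhs_agree.
    * by exists M.
    move=> [x' N] [/= h1 h2] y hy; split => _.
      by apply: HM => i iM; rewrite h1 // hy // (leq_trans iM h2).
    by apply: HM.
  + have : nbhs x (~` C) by move: Cco; rewrite openE => /(_ x nCx).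
    move=> /agree_nbhs [M HM].
    exists ([set x' | agree M x x'], [set N | (M <= N)%N]); first split.
    * exact: nbhs_agree.
    * by exists M.
    move=> [x' N] [/= h1 h2] y hy; split => h.
      by exfalso; apply: (HM x' h1).
    by exfalso; apply: (HM y) => // i iM; rewrite h1 // hy // (leq_trans iM h2).
- move=> M _ HM; exists M => t t' h Ct.
  by have /(_ t I t' h) [+ _] := HM M (leqnn M); apply.
Qed.
Definition pt N (s : {ffun 'I_N -> bool}) : cantor_space :=
  fun k => if insub k : option 'I_N is Some j then s j else false.

Lemma pt_cyl N (s : {ffun 'I_N -> bool}) : cyl s (pt s).
Proof. by move=> i; rewrite /pt valK. Qed.

Definition restr N (s : {ffun 'I_N.+1 -> bool}) : {ffun 'I_N -> bool} :=
  [ffun j => s (widen_ord (leqnSn N) j)].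

Definition ext N (r : {ffun 'I_N -> bool}) (b : bool) : {ffun 'I_N.+1 -> bool} :=
  [ffun i : 'I_N.+1 => if insub (val i) : option 'I_N is Some j then r j else b].

Lemma cyl_restr N (s : {ffun 'I_N.+1 -> bool}) : cyl s `<=` cyl (restr s).
Proof. by move=> t h j; rewrite ffunE -h. Qed.

Lemma restr_ext N r b : restr (@ext N r b) = r.
Proof. by apply/ffunP => j; rewrite !ffunE /= valK. Qed.

Lemma ext_last N r b : @ext N r b ord_max = b.
Proof. by rewrite ffunE insubF //= ltnn. Qed.

Definition phi N (s : {ffun 'I_N.+1 -> bool}) := (restr s, s ord_max).

Lemma phi_inj N : injective (@phi N).
Proof.
move=> s s' [h1 h2]; apply/ffunP => i.
have [lt|ge] := ltnP i N.
  have -> : i = widen_ord (leqnSn N) (Ordinal lt) by apply: val_inj.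
  by move: (congr1 (fun f : {ffun 'I_N -> bool} => f (Ordinal lt)) h1); rewrite !ffunE.
have -> : i = ord_max by apply: val_inj => /=; apply/eqP; rewrite eqn_leq ge -ltnS ltn_ord.
by [].
Qed.

Definition Good (C : set cantor_space) N : {set {ffun 'I_N -> bool}} :=
  finset (fun s : {ffun 'I_N -> bool} => `[< cyl s `<=` C >]).

Lemma ncylE C N : ncyl C N = #|Good C N|.
Proof. by apply: eq_card => s; rewrite inE; apply/idP/idP; rewrite in_setE //= => h; rewrite in_setE /=; apply/asboolP. Qed.

Definition decided (C : set cantor_space) N :=
  forall s : {ffun 'I_N -> bool}, cyl s `<=` C \/ cyl s `<=` ~` C.

Lemma Good_ge C N : (2 * #|Good C N| <= #|Good C N.+1|)%N.
Proof.
rewrite -(card_in_imset (f := @phi N)); last by move=> ? ? _ _; apply: phi_inj.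
rewrite mulnC -[X in (_ * X)%N]card_bool -cardsT -cardsX.
apply: subset_leq_card. apply/fintype.subsetP => -[r b]; rewrite !inE /= andbT => /asboolP rG.
apply/imsetP; exists (ext r b).
  rewrite inE; apply/asboolP => t /cyl_restr; rewrite restr_ext; exact: rG.
by rewrite /phi restr_ext ext_last.
Qed.

Lemma Good_eq C N : decided C N -> #|Good C N.+1| = (2 * #|Good C N|)%N.
Proof.
move=> dC; apply/eqP; rewrite eqn_leq Good_ge andbT.
rewrite -(card_in_imset (f := @phi N)); last by move=> ? ? _ _; apply: phi_inj.
rewrite mulnC -[X in (_ * X)%N]card_bool -cardsT -cardsX.
apply: subset_leq_card; apply/fintype.subsetP => _ /imsetP[s sG0 ->].
have sG : cyl s `<=` C by move: sG0; rewrite inE => /asboolP.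
rewrite !inE /= andbT; apply/asboolP.
case: (dC (restr s)) => // h.
have := h _ (cyl_restr (pt_cyl s)); have := sG _ (pt_cyl s); by [].
Qed.

Lemma decidedS C N : decided C N -> decided C N.+1.
Proof.
move=> dC s; case: (dC (restr s)) => h; [left|right];
  exact: subset_trans (@cyl_restr N s) h.
Qed.

Section LamR.
Context {R : realType}.

Definition aa (C : set cantor_space) (N : nat) : R := (ncyl C N)%:R / (2 ^+ N : R).

Lemma aaS_eq2 C N : (2 * ncyl C N)%:R / (2 ^+ N.+1 : R) = aa C N.
Proof.
rewrite /aa natrM exprS; field.
by rewrite expf_neq0 // pnatr_eq0.
Qed.

Lemma aa_le C N : aa C N <= aa C N.+1.
Proof.
rewrite -aaS_eq2 /aa !ncylE ler_pM2r ?ler_nat ?Good_ge //.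
by rewrite invr_gt0 exprn_gt0.
Qed.

Lemma aa_eq C N : decided C N -> aa C N.+1 = aa C N.
Proof. by move=> d; rewrite -(aaS_eq2 C N) /aa !ncylE Good_eq. Qed.

Lemma aa_ge0 C N : 0 <= aa C N.
Proof. by rewrite /aa divr_ge0 // exprn_ge0. Qed.

Lemma aa_mono C M N : (M <= N)%N -> aa C M <= aa C N.
Proof.
move=> MN; elim: N MN => [|N IH]; first by rewrite leqn0 => /eqP ->.
rewrite leq_eqVlt => /orP[/eqP -> //|]; rewrite ltnS => /IH h.
exact: le_trans h (aa_le _ _).
Qed.

Lemma decided_le C M N : (M <= N)%N -> decided C M -> decided C N.
Proof.
move=> MN; elim: N MN => [|N IH]; first by rewrite leqn0 => /eqP ->.
rewrite leq_eqVlt => /orP[/eqP -> //|]; rewrite ltnS => /IH h d.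
exact: decidedS (h d).
Qed.

Lemma aa_const C N M : decided C N -> (N <= M)%N -> aa C M = aa C N.
Proof.
move=> d; elim: M => [|M IH]; first by rewrite leqn0 => /eqP ->.
rewrite leq_eqVlt => /orP[/eqP -> //|]; rewrite ltnS => h.
by rewrite aa_eq ?IH //; exact: decided_le h d.
Qed.

Lemma lam_dec C N : decided C N -> lam C = aa C N.
Proof.
move=> d.
have ub : ubound (range (aa C)) (aa C N).
  move=> _ [M _ <-]; have [MN|NM] := leqP M N; first exact: aa_mono.
  by rewrite (aa_const d (ltnW NM)).
apply/eqP; rewrite eq_le; apply/andP; split.
  by apply: ge_sup => //; exists (aa C N); exists N.
apply: sup_upper_bound; last by exists N.
split; first by exists (aa C N); exists N.
by exists (aa C N).
Qed.
End LamR.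

Definition dec (C : set cantor_space) := exists N, decided C N.

Lemma clopen_dec C : clopen C -> dec C.
Proof.
move=> /clopen_decided [N HN]; exists N => s.
have ag : forall t, cyl s t -> agree N (pt s) t.
  by move=> t ht i iN; have := pt_cyl s (Ordinal iN); have := ht (Ordinal iN) => /= -> ->.
have [Cp|nCp] := pselect (C (pt s)).
  by left => t /ag h; exact: HN h Cp.
by right => t /ag h Ct; apply: nCp; apply: HN (agree_sym h) Ct.
Qed.

Lemma cyl_ne N (s : {ffun 'I_N -> bool}) (C D : set cantor_space) :
  cyl s `<=` C -> cyl s `<=` ~` C -> False.
Proof. by move=> h1 h2; apply: (h2 _ (pt_cyl s)); apply: h1 (pt_cyl s). Qed.

Lemma decidedI C D N : decided C N -> decided D N -> decided (C `&` D) N.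
Proof.
move=> dC dD s; case: (dC s) => hC; last by right => t /hC h [].
case: (dD s) => hD; last by right => t /hD h [].
by left => t ht; split; [exact: hC|exact: hD].
Qed.

Lemma decidedC C N : decided C N -> decided (~` C) N.
Proof. by move=> dC s; case: (dC s) => h; [right => t /h ht nC; apply: nC|left]. Qed.

Lemma decI C D : dec C -> dec D -> dec (C `&` D).
Proof.
move=> [N dC] [M dD]; exists (maxn N M); apply: decidedI.
  exact: decided_le (leq_maxl _ _) dC.
exact: decided_le (leq_maxr _ _) dD.
Qed.

Lemma decC C : dec C -> dec (~` C).
Proof. by move=> [N d]; exists N; exact: decidedC. Qed.

Section LamAdd.
Context {R : realType}.

Lemma lam_add C D : dec C -> dec D ->
  lam C = lam (C `&` D) + lam (C `&` ~` D) :> R.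
Proof.
move=> [N0 dC0] [M0 dD0]; set N := maxn N0 M0.
have dC := decided_le (leq_maxl N0 M0) dC0.
have dD := decided_le (leq_maxr N0 M0) dD0.
rewrite (lam_dec dC) (lam_dec (decidedI dC dD)) (lam_dec (decidedI dC (decidedC dD))).
rewrite /aa -mulrDl -natrD !ncylE.
have -> : Good C N = Good (C `&` D) N :|: Good (C `&` ~` D) N.
  apply/setP => s; rewrite !inE; apply/asboolP/orP.
    move=> h; case: (dD s) => hD; [left|right]; apply/asboolP => t ht; split;
      by [apply: h|apply: hD].
  by case=> /asboolP h t /h [].
rewrite cardsU.
have -> : Good (C `&` D) N :&: Good (C `&` ~` D) N = finset.set0.
  apply/setP => s; rewrite !inE; apply/negbTE/negP => /andP[/asboolP h1 /asboolP h2].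
  by apply: (@cyl_ne N s D D) => t ht; [case: (h1 t ht)|case: (h2 t ht)].
by rewrite cards0 subn0.
Qed.

Lemma lam_ge0 C : dec C -> 0 <= lam C :> R.
Proof. by move=> [N d]; rewrite (lam_dec d) aa_ge0. Qed.

Lemma lam_mono C D : dec C -> dec D -> C `<=` D -> lam C <= lam D :> R.
Proof.
move=> dC dD CD; rewrite (lam_add dD dC).
have -> : D `&` C = C by apply/seteqP; split => t; [case|move=> h; split => //; apply: CD].
by rewrite lerDl lam_ge0 //; apply: decI dD (decC dC).
Qed.

Lemma lam0 : lam set0 = 0 :> R.
Proof.
have d : decided set0 0 by move=> s; right => t _ [].
rewrite (lam_dec d) /aa ncylE.
have -> : Good set0 0 = finset.set0.
  by apply/setP => s; rewrite !inE; apply/negbTE/negP => /asboolP h; apply: (h _ (pt_cyl s)).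
by rewrite cards0 mul0r.
Qed.
End LamAdd.

Section Balg.
Context {R : realType} (B : set (set X)).
Hypothesis hB : admissible_algebra (R:=R) B.

Lemma BT : B setT. Proof. by case: hB => -[]. Qed.
Lemma BC G : B G -> B (~` G). Proof. by case: hB => -[_ h _] _; apply: h. Qed.
Lemma BU G H : B G -> B H -> B (G `|` H). Proof. by case: hB => -[_ _ h] _; apply: h. Qed.
Lemma BI G H : B G -> B H -> B (G `&` H).
Proof.
move=> bG bH; rewrite -(setCK (G `&` H)) setCI; apply: BC; apply: BU; exact: BC.
Qed.
Lemma B0 : B set0. Proof. by rewrite -setCT; apply: BC; apply: BT. Qed.

Lemma decB G n : B G -> dec (sect G n).
Proof. by move=> bG; case: hB => _ /(_ G bG) [/(_ n) c _]; apply: clopen_dec. Qed.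

Lemma cvB G : B G -> (fun n => lam (sect G n) : R) @ \oo --> mu (R:=R) G.
Proof. by move=> bG; case: hB => _ /(_ G bG) [_ [l hl]]; rewrite /mu (cvg_lim _ hl). Qed.

Lemma mu_mono G H : B G -> B H -> G `<=` H -> mu (R:=R) G <= mu (R:=R) H.
Proof.
move=> bG bH GH; apply: ler_lim; [exact: cvgP (cvB bG)|exact: cvgP (cvB bH)|].
by apply: nearW => n; apply: lam_mono; [exact: decB|exact: decB|move=> t; apply: GH].
Qed.

Lemma lam_subU G H n : B G -> B H ->
  lam (sect (G `|` H) n) <= lam (sect G n) + lam (sect H n) :> R.
Proof.
move=> bG bH.
rewrite (lam_add (decB n (BU bG bH)) (decB n bG)).
have -> : sect (G `|` H) n `&` sect G n = sect G n.
  by apply/seteqP; split => t; [case|move=> h; split => //; left].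
rewrite lerD2l; apply: lam_mono.
- exact: decI (decB n (BU bG bH)) (decC (decB n bG)).
- exact: decB.
by move=> t [[]].
Qed.

Lemma mu_sub G H : B G -> B H -> mu (R:=R) (G `|` H) <= mu (R:=R) G + mu (R:=R) H.
Proof.
move=> bG bH.
have cv : (fun n => lam (sect G n) + lam (sect H n) : R) @ \oo --> mu (R:=R) G + mu (R:=R) H.
  by apply: cvgD; [exact: cvB|exact: cvB].
rewrite -(cvg_lim (@norm_hausdorff _ R^o) cv).
apply: ler_lim; [exact: cvgP (cvB (BU bG bH))|exact: cvgP cv|].
by apply: nearW => n; apply: lam_subU.
Qed.

Lemma mu0 : mu (R:=R) set0 = 0.
Proof.
rewrite /mu; apply: cvg_lim => //.
have -> : (fun n => lam (sect set0 n) : R) = fun=> 0.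
  apply: funext => n; rewrite -(@lam0 R); congr lam.
exact: cvg_cst.
Qed.

End Balg.

Lemma fin_ev (P : nat -> nat -> Prop) J :
  (forall i, exists N, forall n, (N <= n)%N -> P i n) ->
  exists N, forall i n, (i <= J)%N -> (N <= n)%N -> P i n.
Proof.
move=> h; elim: J => [|J [N1 h1]].
  have [N0 h0] := h 0%N; exists N0 => i n; rewrite leqn0 => /eqP ->; exact: h0.
have [N2 h2] := h J.+1; exists (maxn N1 N2) => i n.
rewrite leq_eqVlt => /orP[/eqP -> hn|]; first by apply: h2; rewrite (leq_trans _ hn) // leq_maxr.
by rewrite ltnS => hi hn; apply: h1 => //; rewrite (leq_trans _ hn) // leq_maxl.
Qed.


Section Construction.
Context {R : realType} (B : set (set X)).
Hypothesis hB : admissible_algebra (R:=R) B.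
Variable eB : nat -> set X.
Hypothesis eBB : forall i, B (eB i).
Variable bj : nat -> set X.
Hypothesis bjB : forall j, B (bj j).

Fixpoint D (J : nat) : set X := if J is J'.+1 then D J' `|` bj J' else set0.

Lemma DB J : B (D J).
Proof. elim: J => [|J IH]; [exact: B0 hB|]. simpl. apply: (BU hB IH (bjB J)). Qed.

Lemma D_mono J K : (J <= K)%N -> D J `<=` D K.
Proof.
elim: K => [|K IH]; first by rewrite leqn0 => /eqP ->.
rewrite leq_eqVlt => /orP[/eqP -> x hx //|]; rewrite ltnS => /IH h x /h hx; by left.
Qed.

Lemma bj_D j J : (j < J)%N -> bj j `<=` D J.
Proof. by move=> jJ x hx; apply: (D_mono jJ) => /=; right. Qed.

Definition m J i : R := mu (R:=R) (D J `&` eB i).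

Lemma m_mono i J K : (J <= K)%N -> m J i <= m K i.
Proof.
move=> JK; apply: (mu_mono hB (BI hB (DB J) (eBB i)) (BI hB (DB K) (eBB i))).
by move=> x [h1 h2]; split => //; apply: D_mono JK _ h1.
Qed.

Lemma m_ub i J : m J i <= mu (R:=R) (eB i).
Proof. by apply: (mu_mono hB (BI hB (DB J) (eBB i)) (eBB i)) => x []. Qed.

Definition L i : R := sup (range (m ^~ i)).

Lemma hasL i : has_sup (range (m ^~ i)).
Proof.
split; first by exists (m 0 i); exists 0%N.
by exists (mu (R:=R) (eB i)) => _ [J _ <-]; apply: m_ub.
Qed.

Lemma m_le_L i J : m J i <= L i.
Proof. by apply: sup_upper_bound; [exact: hasL|exists J]. Qed.

Lemma exNN : exists NN : nat -> nat, forall J i n, (i <= J)%N -> (NN J <= n)%N ->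
  lam (sect (D J `&` eB i) n) <= m J i + (J.+1%:R)^-1.
Proof.
suff H : forall J, exists N, forall i n, (i <= J)%N -> (N <= n)%N ->
  lam (sect (D J `&` eB i) n) <= m J i + (J.+1%:R)^-1.
  by have [NN hNN] := boolp.choice H; exists NN.
move=> J.
apply: fin_ev => i.
have cv := cvB hB (BI hB (DB J) (eBB i)).
have /cvgrPdist_le /(_ (J.+1%:R^-1)) := cv.
case; first by rewrite invr_gt0 ltr0n.
move=> N _ HN; exists N => n /HN; exact: ler_distlCDr.
Qed.

Variable NN : nat -> nat.
Hypothesis hNN : forall J i n, (i <= J)%N -> (NN J <= n)%N ->
  lam (sect (D J `&` eB i) n) <= m J i + (J.+1%:R)^-1.

Fixpoint ff n := if n is n'.+1 then
  (if (NN (ff n').+1 <= n'.+1)%N then (ff n').+1 else ff n') else 0%N.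

Lemma ff_ok n : ff n = 0%N \/ (NN (ff n) <= n)%N.
Proof.
elim: n => [|n IH]; first by left.
rewrite /=; case: ifP => h; first by right.
by case: IH => [->|h']; [left|right; exact: leqW].
Qed.

Lemma ff_mono a b : (a <= b)%N -> (ff a <= ff b)%N.
Proof.
elim: b => [|b IH]; first by rewrite leqn0 => /eqP ->.
rewrite leq_eqVlt => /orP[/eqP -> //|]; rewrite ltnS => /IH h.
by apply: leq_trans h _; rewrite /=; case: ifP.
Qed.

Lemma ff_unb J : exists M, forall n, (M <= n)%N -> (J <= ff n)%N.
Proof.
elim: J => [|J [M hM]]; first by exists 0%N.
set n0 := maxn M (NN J.+1).
have h0 : (J <= ff n0)%N by apply: hM; rewrite leq_maxl.
have [lt|ge] := ltnP J (ff n0).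
  by exists n0 => n hn; apply: leq_trans lt (ff_mono hn).
have e0 : ff n0 = J by apply/eqP; rewrite eqn_leq ge h0.
exists n0.+1 => n hn; apply: leq_trans _ (ff_mono hn).
by rewrite /= e0 ifT //; apply: leqW; rewrite leq_maxr.
Qed.

Lemma cv_main i : (fun n => lam (sect (D (ff n) `&` eB i) n) : R) @ \oo --> L i.
Proof.
apply/cvgrPdist_le => e e0.
have e20 : 0 < e / 2 by rewrite divr_gt0.
have [x [J1 _ <-] hJ1] := sup_adherent e20 (hasL i).
have cvJ1 := cvB hB (BI hB (DB J1) (eBB i)).
have /cvgrPdist_le /(_ (e / 2) e20) [N1 _ HN1] := cvJ1.
have [M1 hM1] := ff_unb J1.
have [k hk] := ltr_add_invr e0; rewrite add0r in hk.
set J2 := maxn (maxn i 1) k.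
have [M2 hM2] := ff_unb J2.
exists (maxn (maxn N1 M1) M2) => // n /= hn.
have hN1 : (N1 <= n)%N by lia.
have hnM1 : (M1 <= n)%N by lia.
have hnM2 : (M2 <= n)%N by lia.
have hJ2 := hM2 _ hnM2.
have iJ2 : (i <= J2)%N by rewrite /J2; lia.
have oJ2 : (1 <= J2)%N by rewrite /J2; lia.
have kJ2 : (k <= J2)%N by rewrite /J2; lia.
rewrite ler_distlC; apply/andP; split.
- have h1 := HN1 n hN1.
  have h2 : lam (sect (D J1 `&` eB i) n) <= lam (sect (D (ff n) `&` eB i) n) :> R.
    apply: (lam_mono (decB hB n (BI hB (DB J1) (eBB i))) (decB hB n (BI hB (DB (ff n)) (eBB i)))).
    by move=> t [h3 h4]; split => //; apply: (D_mono (hM1 _ hnM1)).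
  move: h1; rewrite ler_distlC => /andP[h1 _].
  have h1' : m J1 i - e / 2 <= lam (sect (D J1 `&` eB i) n) := h1.
  have hJ1' : L i - e / 2 < m J1 i := hJ1.
  lra.
- have ffn1 : ff n <> 0%N by move=> h; move: (leq_trans oJ2 hJ2); rewrite h.
  have hNf : (NN (ff n) <= n)%N by case: (ff_ok n).
  have h1 := hNN (leq_trans iJ2 hJ2) hNf.
  have h2 := m_le_L i (ff n).
  have h3 : (ff n).+1%:R^-1 <= k.+1%:R^-1 :> R.
    rewrite lef_pV2 ?posrE ?ltr0n // ler_nat ltnS.
    exact: leq_trans kJ2 hJ2.
  apply: le_trans h1 _; apply: lerD h2 (le_trans h3 (ltW hk)).
Qed.

End Construction.

Lemma count_enum T (A : set T) (a0 : T) : A a0 -> countable A ->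
  exists e : nat -> T, (forall n, A (e n)) /\ (forall x, A x -> exists n, e n = x).
Proof.
move=> Aa0 /countable_injP [g ginj].
exists (fun n => if pselect (exists x, A x /\ g x = n) is left p then projT1 (cid p) else a0).
split.
  move=> n; case: pselect => // p; by case: (projT2 (cid p)).
move=> x Ax; exists (g x); case: pselect => [p|]; last by case; exists x.
case: (projT2 (cid p)) => Ay gy; apply: ginj => //; exact: mem_set.
Qed.

Lemma gen_alg (G : set (set X)) : set_algebra (gen_algebra G).
Proof.
rewrite /gen_algebra /smallest; split.
- by move=> F [[]].
- move=> A hA F [alg GF]; case: (alg) => h1 h2 h3; apply: h2; exact: (hA F (conj alg GF)).
- move=> A1 A2 e1 e2 F [alg GF]; case: (alg) => k1 k2 k3; apply: k3; [exact: (e1 F (conj alg GF))|exact: (e2 F (conj alg GF))].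
Qed.

Section Falg.
Context {R : realType} (B : set (set X)).
Hypothesis hB : admissible_algebra (R:=R) B.
Variable Dn : nat -> set X.

Definition Falg : set (set X) := [set G | exists C1 C2, B C1 /\ B C2 /\
  forall n, sect G n = sect ((Dn n `&` C1) `|` (~` Dn n `&` C2)) n].

Lemma Falg_alg : set_algebra Falg.
Proof.
split.
- exists setT, setT; split; first exact: BT hB; split; first exact: BT hB.
  move=> n; apply/seteqP; split => t //= _.
  by have [h|h] := pselect (Dn n (n, t)); [left|right].
- move=> G [C1 [C2 [b1 [b2 h]]]]; exists (~` C1), (~` C2).
  split; first exact: (@BC R B hB C1 b1). split; first exact: (@BC R B hB C2 b2).
  move=> n; apply/seteqP; split => t /=.
  + move=> nG; have [d|d] := pselect (Dn n (n, t)); [left|right]; split => // c;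
    apply: nG; (have : sect G n t; [rewrite h /=|by []]); by [left|right].
  + move=> Hc Gt; have : sect G n t by [].
    rewrite h /= => -[[d c]|[d c]]; case: Hc => -[d' c'];
      [exact: c' c|exact: d' d|exact: d d'|exact: c' c].
- move=> G H [C1 [C2 [b1 [b2 h]]]] [C3 [C4 [b3 [b4 h']]]].
  exists (C1 `|` C3), (C2 `|` C4).
  split; first exact: (@BU R B hB _ _ b1 b3). split; first exact: (@BU R B hB _ _ b2 b4).
  move=> n; apply/seteqP; split => t /=.
  + case=> Gt.
    * have : sect G n t by [].
      by rewrite h /= => -[[d c]|[d c]]; [left; split => //; left|right; split => //; left].
    * have : sect H n t by [].
      by rewrite h' /= => -[[d c]|[d c]]; [left; split => //; right|right; split => //; right].
  + case=> -[d [c|c]].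
    * by left; have : sect G n t; [rewrite h /=; left|].
    * by right; have : sect H n t; [rewrite h' /=; left|].
    * by left; have : sect G n t; [rewrite h /=; right|].
    * by right; have : sect H n t; [rewrite h' /=; right|].
Qed.

Lemma Falg_B : B `<=` Falg.
Proof.
move=> G bG; exists G, G; split => //; split => // n.
apply/seteqP; split => t /=.
  by move=> Gt; have [d|d] := pselect (Dn n (n, t)); [left|right].
by case=> -[].
Qed.

Lemma Falg_A : Falg [set p | Dn p.1 p].
Proof.
exists setT, set0; split; first exact: BT hB; split; first exact: B0 hB.
by move=> n; apply/seteqP; split => t /=; [left|case=> -[]].
Qed.

Hypothesis DnB : forall n, B (Dn n).
Hypothesis Dconv : forall C, B C -> exists l : R,
  (fun n => lam (sect (Dn n `&` C) n) : R) @ \oo --> l.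

Lemma Falg_adm G : Falg G -> admissible (R:=R) G.
Proof.
move=> [C1 [C2 [b1 [b2 h]]]].
have bE n : B ((Dn n `&` C1) `|` (~` Dn n `&` C2)).
  apply: (@BU R B hB); apply: (@BI R B hB) => //; apply: (@BC R B hB); exact: DnB.
split.
  move=> n; rewrite h; case: hB => _ /(_ _ (bE n)) [+ _]; exact.
have [l1 h1] := Dconv b1; have [l2 h2] := Dconv b2.
exists (l1 + (mu (R:=R) C2 - l2)).
have -> : (fun n => lam (sect G n) : R) =
  (fun n => lam (sect (Dn n `&` C1) n) + (lam (sect C2 n) - lam (sect (Dn n `&` C2) n))).
  apply: funext => n; rewrite h.
  rewrite (lam_add (decB hB n (bE n)) (decB hB n (DnB n))).
  rewrite (lam_add (decB hB n b2) (decB hB n (DnB n))).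
  have -> : sect (Dn n `&` C1 `|` ~` Dn n `&` C2) n `&` sect (Dn n) n = sect (Dn n `&` C1) n.
    apply/seteqP; split => t; rewrite /sect /=.
      by case=> -[[d c]|[d c]] d2; [split|exfalso; apply: d].
    by case=> d c; split => //; left.
  have -> : sect (Dn n `&` C1 `|` ~` Dn n `&` C2) n `&` ~` sect (Dn n) n =
      sect C2 n `&` ~` sect (Dn n) n.
    apply/seteqP; split => t; rewrite /sect /=.
      by case=> -[[d c]|[d c]] d2; [exfalso; apply: d2|split].
    by case=> c d; split => //; right.
  have -> : sect C2 n `&` sect (Dn n) n = sect (Dn n `&` C2) n.
    by apply/seteqP; split => t; rewrite /sect /= => -[].
  by congr (_ + _); rewrite addrC addKr.
apply: cvgD => //; apply: cvgB => //; exact: (@cvB R B hB C2 b2).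
Qed.

End Falg.

Unset Implicit Arguments.

Theorem lemma2p5 (R : realType) (B : set (set X)) (S : set (nat -> set X))
    (eps : R) :
  countable B -> admissible_algebra (R := R) B ->
  countable S -> S `<=` Nseq (R := R) B -> 0 < eps ->
  exists A : set X,
    [/\ admissible_algebra (R := R) (gen_algebra (B `|` [set A])),
        (forall Bs, S Bs -> exists k0 : nat, exists m : nat,
           forall n, (m <= n)%N -> sect (Bs k0) n `<=` sect A n) &
        mu (R := R) A <= eps].
Proof.
move=> cB hB cS SN eps0.
have [eB [eBB eBs]] := count_enum (BT hB) cB.
have [eS [eSN eSs]] : exists eS : nat -> (nat -> set X),
    (forall j, Nseq (R:=R) B (eS j)) /\ (forall Bs, S Bs -> exists j, eS j = Bs).
  have [[s0 Ss0]|nS] := pselect (exists s0, S s0).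
    have [e [eS1 eS2]] := count_enum Ss0 cS.
    by exists e; split => // j; apply: SN.
  exists (fun _ _ => set0); split; last by move=> Bs SBs; exfalso; apply: nS; exists Bs.
  move=> j; split; first by move=> k; exact: B0 hB.
  split; first by move=> k.
  have -> : (fun _ : nat => mu (R:=R) (@set0 X)) = fun=> 0.
    by apply: funext => k; exact: mu0.
  exact: cvg_cst.
have hk : forall j, exists k, mu (R:=R) (eS j k) <= eps / 2 ^+ j.+1.
  move=> j; have [_ [_ cv]] := eSN j.
  have d0 : 0 < eps / 2 ^+ j.+1 by rewrite divr_gt0 // exprn_gt0.
  have /cvgrPdist_le /(_ _ d0) [N _ HN] := cv.
  by exists N; have := HN N (leqnn N); move/ler_distlCDr; rewrite add0r.
have [kk hkk] := boolp.choice hk.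
pose bj := fun j => eS j (kk j).
have bjB : forall j, B (bj j) by move=> j; have [h _] := eSN j; exact: h.
have Dle : forall J, mu (R:=R) (D bj J) <= eps - eps / 2 ^+ J.
  elim=> [|J IH].
    by rewrite mu0 expr0 divr1 subrr.
  apply: le_trans (mu_sub hB (DB hB bjB J) (bjB J)) _.
  have h := hkk J.
  have ea : eps / 2 ^+ J = 2 * (eps / 2 ^+ J.+1).
    by rewrite exprS; field; rewrite expf_neq0 // pnatr_eq0.
  rewrite ea in IH.
  have h' : mu (R:=R) (bj J) <= eps / 2 ^+ J.+1 := h.
  lra.
have [NN hNN] := exNN hB eBB bjB.
pose A := [set p : X | D bj (ff NN p.1) p].
exists A; split.
- pose Dn := fun n => D bj (ff NN n).
  have sub : gen_algebra (B `|` [set A]) `<=` Falg B Dn.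
    apply: smallest_sub; first exact: Falg_alg hB Dn.
    move=> G [bG|->]; [exact: Falg_B|exact: (@Falg_A R B hB Dn)].
  split; first exact: gen_alg.
  move=> G /sub; apply: (Falg_adm hB).
    by move=> n; exact: (@DB R B hB bj bjB (ff NN n)).
  move=> C bC; have [i <-] := eBs C bC; exists (L eB bj i).
  exact: (cv_main hB eBB bjB hNN).
- move=> Bs /eSs [j <-]; exists (kk j).
  have [M hM] := ff_unb NN j.+1.
  by exists M => n hn t ht; apply: (bj_D (hM n hn)); exact: ht.
- have [iT eT] := eBs setT (BT hB).
  have cvA : (fun n => lam (sect A n) : R) @ \oo --> L eB bj iT.
    have := cv_main hB eBB bjB hNN (i:=iT).
    have -> // : (fun n => lam (sect (D bj (ff NN n) `&` eB iT) n) : R) =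
       (fun n => lam (sect A n)).
    by apply: funext => n; rewrite eT setIT.
  rewrite /mu (cvg_lim (@norm_hausdorff _ R^o) cvA).
  apply: ge_sup; first by exists (m eB bj 0 iT); exists 0%N.
  move=> _ [J _ <-]; rewrite /m eT setIT.
  have := Dle J; have : 0 <= eps / 2 ^+ J by rewrite divr_ge0 ?exprn_ge0 // ltW.
  lra.
Qed.
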